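(* Let $\mathcal C$ be a set of representatives of the conjugacy classes of $G$. Under the isomorphism $\mathrm{HH}^\bullet(S(V)\#G)\cong\bigoplus_{g\in\mathcal C}\mathrm{HH}^\bullet(S(V),S(V)\otimes g)^{Z(g)}$ (which identifies $\alpha\in\mathrm{HH}^\bullet(S(V),S(V)\otimes g)^{Z(g)}$ with $T^G_{Z(g)}(\alpha)=\sum_{h\in[G/Z(g)]}{}^h\alpha$), the cup product corresponds to the product $\dot\smile$ given as follows: for $\alpha\in\mathrm{HH}^\bullet(S(V),S(V)\otimes g)^{Z(g)}$ and $\beta\in\mathrm{HH}^\bullet(S(V),S(V)\otimes h)^{Z(h)}$ ($g,h\in\mathcal C$), $$\alpha\ \dot\smile\ \beta=\sum_{x\in D}T^{Z(k)}_{{}^yZ(g)\cap{}^{yx}Z(h)}\big({}^y\alpha\smile{}^{yx}\beta\big),$$ where $D$ is a set of representatives of the double cosets $Z(g)\backslash G/Z(h)$, and for each $x\in D$, $k=k(x)\in\mathcal C$ and $y=y(x)\in G$ are chosen so that ${}^yg\cdot{}^{yx}h=k$. Here ${}^y\alpha\smile{}^{yx}\beta$ is the cup product in $\mathrm{HH}^\bullet(S(V),S(V)\#G)^{{}^yZ(g)\cap{}^{yx}Z(h)}$, and the transfer lands in the $k$-component $\mathrm{HH}^\bullet(S(V),S(V)\otimes k)^{Z(k)}$.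
   Context: Let $G$ be a finite group acting linearly on a finite-dimensional complex vector space $V$; fix a $G$-invariant Hermitian inner product; $V^g$ denotes the fixed space of $g$ and $(V^g)^\perp$ its orthogonal complement. $S(V)\#G$ is the skew group algebra. $\mathrm{HH}^\bullet(S(V),S(V)\#G)$ (Hochschild cohomology with cup product) decomposes as $\bigoplus_{g\in G}\mathrm{HH}^\bullet(S(V),S(V)\otimes g)$, where the $g$-component $\mathrm{HH}^\bullet(S(V),S(V)\otimes g)$ is isomorphic to $S(V^g)\otimes\bigwedge^{\bullet-\operatorname{codim}V^g}(V^g)^*\otimes\bigwedge^{\operatorname{codim}V^g}((V^g)^\perp)^*\otimes g$. $G$ acts on $\mathrm{HH}^\bullet(S(V),S(V)\#G)$ by algebra automorphisms (induced from its action on $V$ and conjugation on $S(V)\#G$), mapping the $g$-component to the $xgx^{-1}$-component, ${}^x\alpha$ denoting the image of $\alpha$ under $x$; ${}^yL=yLy^{-1}$ for a subgroup $L$ and ${}^yg=ygy^{-1}$. It is known that $\mathrm{HH}^\bullet(S(V)\#G)\cong\mathrm{HH}^\bullet(S(V),S(V)\#G)^G$ as algebras. $Z(g)$ is the centralizer of $g$ in $G$. For subgroups $J\le L\le G$ and a $G$-algebra $A$, the transfer $T^L_J:A^J\to A^L$ is $T^L_J(a)=\sum_{h\in[L/J]}{}^ha$, with $[L/J]$ a set of left coset representatives. *)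

(* Defs.v *)
From HB Require Import structures.
From mathcomp Require Import all_boot all_order all_algebra all_fingroup.
Set Implicit Arguments. Unset Strict Implicit. Unset Printing Implicit Defensive.
Import GRing.Theory.
Local Open Scope ring_scope.

(* An abstract "G-graded G-algebra": a ring A = (+)_{g in G} A_g with
   A_g * A_h <= A_{gh}, and a left action of G by ring automorphisms
   mapping A_g to A_{x g x^-1}.  HH^*(S(V), S(V)#G) with the cup product and
   the G-action of the paper is such a structure.
   Group conventions: mathcomp's  g ^ z = z^-1 g z, so the paper's
   ^x g = x g x^-1 is  g ^ x^-1 , and ^x L = x L x^-1 is  L :^ x^-1. *)
Record graded_Galg (gT : finGroupType) (A : pzRingType)
    (act : gT -> A -> A) (comp : gT -> pred A) : Prop := GradedGalg {
  comp0 : forall g, comp g 0;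
  compB : forall g a b, comp g a -> comp g b -> comp g (a - b);
  compM : forall g h a b, comp g a -> comp h b -> comp (g * h)%g (a * b);
  comp1 : comp 1%g 1;
  comp_decomp : forall a : A, exists f : gT -> A,
      (forall g, comp g (f g)) /\ a = \sum_(g : gT) f g;
  comp_direct : forall f : gT -> A, (forall g, comp g (f g)) ->
      \sum_(g : gT) f g = 0 -> forall g, f g = 0;
  actD : forall x a b, act x (a + b) = act x a + act x b;
  actM : forall x a b, act x (a * b) = act x a * act x b;
  act1r : forall x, act x 1 = 1;
  act1 : forall a, act 1%g a = a;
  actMg : forall x z a, act (x * z)%g a = act x (act z a);
  act_comp : forall x g a, comp g a -> comp (g ^ x^-1)%g (act x a)
}.

Definition fixed_by (gT : finGroupType) (A : Type) (act : gT -> A -> A)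
  (L : {set gT}) (a : A) : Prop := forall x, x \in L -> act x a = a.

Definition transfer (gT : finGroupType) (A : nmodType) (act : gT -> A -> A)
  (L J : {set gT}) (a : A) : A :=
  \sum_(C in lcosets J L) act (repr C) a.

(* Main.v *)
Require Import Defs.
From HB Require Import structures.
From mathcomp Require Import all_boot all_order all_algebra all_fingroup.
Import GRing.Theory.
Local Open Scope group_scope.
Local Open Scope ring_scope.

Section H.
Variables (gT : finGroupType) (A : pzRingType) (act : gT -> A -> A) (comp : gT -> pred A).
Hypothesis HA : graded_Galg act comp.

Lemma act0 x : act x 0 = 0.
Proof.
have := actD HA x 0 0; rewrite addr0 => /eqP.
by rewrite -subr_eq addrN eq_sym => /eqP.
Qed.

Lemma act_sum x (I : Type) (r : seq I) (P : pred I) (F : I -> A) :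
  act x (\sum_(i <- r | P i) F i) = \sum_(i <- r | P i) act x (F i).
Proof. exact: (big_morph _ (actD HA x) (act0 x)). Qed.

Lemma repr_lcoset {J : {group gT}} {X : {set gT}} {C} :
  C \in lcosets J X -> repr C \in C /\ C = (repr C *: J)%g.
Proof.
case/lcosetsP=> a _ ->; have r : repr (a *: J)%g \in (a *: J)%g by apply: mem_repr (lcoset_refl _ _).
by split=> //; apply/esym/lcoset_eqP.
Qed.

Lemma repr_lcoset_mem {J X : {group gT}} {C} :
  J \subset X -> C \in lcosets J X -> repr C \in X.
Proof.
move=> sJX /[dup] /repr_lcoset [rC _] /lcosetsP [b bX eC].
move: rC; rewrite eC => /lcosetP [j jJ ->]; rewrite groupM //.
exact: (subsetP sJX).
Qed.

Lemma act_fixed_coset (J : {group gT}) a u :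
  fixed_by act J u -> act (repr (a *: J)%g) u = act a u.
Proof.
move=> fu; have : repr (a *: J)%g \in (a *: J)%g by apply: mem_repr (lcoset_refl _ _).
by case/lcosetP=> c cJ ->; rewrite (Defs.actMg HA) fu.
Qed.

Lemma transfer_trans (J K : {group gT}) u : J \subset K -> fixed_by act J u ->
  transfer act [set: gT] K (transfer act K J u) = transfer act [set: gT] J u.
Proof.
move=> sJK fu; rewrite /transfer.
under eq_bigr => U _ do rewrite act_sum.
rewrite pair_big_dep /=.
pose S := [set p : {set gT} * {set gT} | (p.1 \in lcosets K [set: gT]) && (p.2 \in lcosets J K)].
pose h := fun p : {set gT} * {set gT} => ((repr p.1 * repr p.2) *: J)%g.
transitivity (\sum_(p in S) act (repr (h p)) u).
  apply: eq_big => [p|p _]; first by rewrite inE.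
  by rewrite /h act_fixed_coset // (Defs.actMg HA).
have inj : {in S &, injective h}.
move=> [U V] [U' V']; rewrite !inE /= /h => /andP [hU hV] /andP [hU' hV'] /= eq.
have [_ eU] := repr_lcoset hU; have [_ eU'] := repr_lcoset hU'.
have [_ eV] := repr_lcoset hV; have [_ eV'] := repr_lcoset hV'.
have rV := repr_lcoset_mem sJK hV; have rV' := repr_lcoset_mem sJK hV'.
have m : (repr U * repr V)%g \in ((repr U' * repr V') *: J)%g by rewrite -eq lcoset_refl.
case/lcosetP: m => j jJ ej.
have eUU : U = U'.
  rewrite eU eU'; apply/lcoset_eqP; rewrite mem_lcoset.
  have -> : ((repr U')^-1 * repr U = repr V' * j * (repr V)^-1)%g.
    by rewrite -(mulgK (repr V) (repr U)) ej -!mulgA mulKg.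
  by rewrite !groupM ?groupV // (subsetP sJK).
subst U'; congr pair.
rewrite eV eV'; apply: (@lcoset_inj _ (repr U)).
by rewrite -!lcosetM.
rewrite -(big_imset (fun W => act (repr W) u) inj) /=.
  apply: eq_bigl => W; apply/imsetP/lcosetsP.
    by case=> p _ ->; exists (repr p.1 * repr p.2)%g; rewrite ?inE.
  case=> a _ ->.
  have ra : repr (a *: K)%g \in (a *: K)%g by apply: mem_repr (lcoset_refl _ _).
  case/lcosetP: (ra) => k kK ek.
  exists (a *: K, (repr (a *: K))^-1 * a *: J)%g.
    rewrite inE /=; apply/andP; split; apply/lcosetsP; first by exists a; rewrite ?inE.
    exists ((repr (a *: K))^-1 * a)%g => //.
    by rewrite ek invMg -mulgA mulVg mulg1 groupV.
  rewrite /h /=.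
  have rb : repr ((repr (a *: K))^-1 * a *: J)%g \in ((repr (a *: K))^-1 * a *: J)%g
    by apply: mem_repr (lcoset_refl _ _).
  case/lcosetP: rb => j jJ ->.
  rewrite !mulgA mulgV mul1g; apply/lcoset_eqP.
  by rewrite mem_lcoset invMg -mulgA mulVg mulg1 groupV.
Qed.
End H.
Arguments repr_lcoset {gT J X C}.
Arguments repr_lcoset_mem {gT J X C}.
Arguments act_fixed_coset {gT A act comp} HA {J a u}.

Lemma conj_lem (gT : finGroupType) (a b z : gT) :
  ((a^-1 * b) ^ z = (a * z)^-1 * (b * z))%g.
Proof. by rewrite conjgE invMg !mulgA. Qed.

Theorem theorem11p3 (gT : finGroupType) (A : pzRingType)
  (act : gT -> A -> A) (comp : gT -> pred A)
  (HA : graded_Galg act comp)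
  (C : {set gT})
  (HC : forall g : gT, #|C :&: (g ^: [set: gT])%g| = 1%N)
  (g h : gT) (Hg : g \in C) (Hh : h \in C)
  (D : {set gT})
  (HD : forall x : gT, #|D :&: ('C[g] :* x * 'C[h])%g| = 1%N)
  (k y : gT -> gT)
  (Hk : forall x, x \in D -> k x \in C)
  (Hky : forall x, x \in D ->
          (g ^ (y x)^-1 * h ^ (y x * x)^-1)%g = k x)
  (alpha beta : A)
  (Ha : comp g alpha) (Hainv : fixed_by act 'C[g] alpha)
  (Hb : comp h beta) (Hbinv : fixed_by act 'C[h] beta) :
  let L x := ('C[g] :^ (y x)^-1 :&: 'C[h] :^ (y x * x)^-1)%g in
  let ab x := act (y x) alpha * act (y x * x)%g beta in
  (forall x, x \in D ->
     [/\ comp (k x) (ab x), fixed_by act (L x) (ab x) & L x \subset 'C[k x]])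
  /\
  transfer act [set: gT] 'C[g] alpha * transfer act [set: gT] 'C[h] beta
  = \sum_(x in D)
      transfer act [set: gT] 'C[k x] (transfer act 'C[k x] (L x) (ab x)).
Proof.
move=> L ab.
have P1 : forall x, x \in D ->
     [/\ comp (k x) (ab x), fixed_by act (L x) (ab x) & L x \subset 'C[k x]].
  move=> x xD; split.
  - rewrite /ab -(Hky x xD); apply: (Defs.compM HA); exact: (Defs.act_comp HA).
  - move=> z /setIP [z1 z2]; rewrite /ab (Defs.actM HA).
    rewrite mem_conjg invgK in z1; rewrite mem_conjg invgK in z2.
    rewrite -!(Defs.actMg HA z) (conjgC z (y x)) (conjgC z (y x * x)).
    by rewrite (Defs.actMg HA (y x) (z ^ y x)) (Defs.actMg HA (y x * x) (z ^ (y x * x))) (Hainv _ z1) (Hbinv _ z2).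
  - apply/subsetP=> z /setIP [z1 z2]; rewrite -(Hky x xD).
    apply/cent1P; apply: commuteM; apply/cent1P.
      by rewrite cent1J.
    by rewrite cent1J.
split=> //.
have TT : forall x, x \in D -> transfer act [set: gT] 'C[k x] (transfer act 'C[k x] (L x) (ab x))
   = transfer act [set: gT] (L x) (ab x).
  move=> x xD; have [_ f s] := P1 x xD.
  exact: (@transfer_trans _ _ act comp HA ('C[g] :^ (y x)^-1 :&: 'C[h] :^ (y x * x)^-1)%G 'C[k x]%G _ s f).
rewrite (eq_bigr _ TT) /transfer mulr_suml.
rewrite [LHS](eq_bigr (fun P => \sum_(Q in lcosets 'C[h] [set: gT]) act (repr P) alpha * act (repr Q) beta)); last by move=> P _; rewrite mulr_sumr.
rewrite !pair_big_dep /= /L /ab.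
pose LG := fun x => ('C[g] :^ (y x)^-1 :&: 'C[h] :^ (y x * x)^-1)%G.
pose S1 := [set p : gT * {set gT} | (p.1 \in D) && (p.2 \in lcosets (LG p.1) [set: gT])].
pose F := fun q : {set gT} * {set gT} => act (repr q.1) alpha * act (repr q.2) beta.
pose hh := fun p : gT * {set gT} =>
  ((repr p.2 * y p.1) *: 'C[g], (repr p.2 * y p.1 * p.1) *: 'C[h])%g.
symmetry.
transitivity (\sum_(p in S1) F (hh p)).
  apply: eq_big => [p|[x W] _]; first by rewrite inE.
  rewrite /F /hh /= !(act_fixed_coset HA) // (Defs.actM HA) -!(Defs.actMg HA) mulgA.
  done.
have inj : {in S1 &, injective hh}.
  move=> [x W] [x' W']; rewrite !inE /= => /andP [xD hW] /andP [x'D hW'] /= [e1 e2].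
  have [_ eW] := repr_lcoset hW; have [_ eW'] := repr_lcoset hW'.
  have m1 : (repr W' * y x')%g \in ((repr W * y x) *: 'C[g])%g by rewrite e1 lcoset_refl.
  case/lcosetP: m1 => c cCg ec.
  have m2 : (repr W' * y x' * x')%g \in ((repr W * y x * x) *: 'C[h])%g by rewrite e2 lcoset_refl.
  case/lcosetP: m2 => d dCh ed.
  have ex : x' = (c^-1 * x * d)%g.
    have -> : x' = ((repr W' * y x')^-1 * (repr W' * y x' * x'))%g by rewrite mulKg.
    by rewrite ed ec !invMg !mulgA !mulgVK.
  have xx : x' = x.
    have /card_le1_eqP H : (#|D :&: ('C[g] :* x * 'C[h])%g| <= 1)%N by rewrite HD.
    apply: (H x x').
      rewrite inE xD /=; apply/mulsgP; exists x 1%g; rewrite ?mulg1 ?group1 ?rcoset_refl //.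
    rewrite inE x'D /= ex; apply: mem_mulg => //.
    by rewrite mem_rcoset mulgK groupV.
  clear ex; subst x'; congr pair.
  rewrite eW eW'. apply/(@lcoset_eqP _ (LG x)); rewrite mem_lcoset; apply/setIP; split; rewrite mem_conjg invgK conj_lem.
    by rewrite ec invMg mulgVK groupV.
  by rewrite (mulgA (repr W')) ed (mulgA (repr W)) invMg mulgVK groupV.
rewrite -(big_imset F inj) /=.
apply: eq_bigl => -[P Q] /=; apply/imsetP/andP.
  case=> -[x W] _ [-> ->]; split; apply/lcosetsP; by eexists; rewrite ?inE.
case=> /lcosetsP [a _ ->] /lcosetsP [b _ ->].
have /cards1P [x ex] : #|D :&: ('C[g] :* (a^-1 * b) * 'C[h])%g| == 1%N by rewrite HD.
have : x \in D :&: ('C[g] :* (a^-1 * b) * 'C[h])%g by rewrite ex set11.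
case/setIP=> xD /mulsgP [t d /rcosetP [c cCg ->] dCh ex0].
set w := (a * c^-1 * (y x)^-1)%g.
exists (x, (w *: LG x)%g).
  rewrite inE /= xD; apply/lcosetsP; by exists w; rewrite ?inE.
have : repr (w *: LG x)%g \in (w *: LG x)%g by apply: mem_repr (lcoset_refl _ _).
case/lcosetP=> l /setIP [l1 l2] el.
rewrite mem_conjg invgK in l1; rewrite mem_conjg invgK in l2.
rewrite /hh /= el; congr pair; apply/esym/lcoset_eqP; rewrite mem_lcoset.
  have -> : (a^-1 * (w * l * y x) = c^-1 * (l ^ y x))%g.
    by rewrite /w conjgE !mulgA mulVg mul1g.
  by rewrite groupM ?groupV.
have -> : (b^-1 * (w * l * y x * x) = d * (l ^ (y x * x)))%g.
  rewrite /w conjgE; set Y := y x; rewrite ex0 !invMg !invgK !mulgA mulgV mul1g.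
  done.
by rewrite groupM.
Qed.
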